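(* Let $\lambda\in\mathbb{C}^n$. The superspace $M(\lambda)$ is a $\mathfrak{gl}(m,n)$-module, where $\mathfrak{gl}(m,n)_0=\mathfrak{gl}_m\oplus\mathfrak{gl}_n$ acts by the tensor product action and the odd part acts by $$E_{i,m+j}\cdot e_{i_1}\wedge\dots\wedge e_{i_r}y(\lambda')=(-1)^r\lambda'_j\,e_i\wedge e_{i_1}\wedge\dots\wedge e_{i_r}y(\lambda'-e_j),$$ $$E_{m+j,i}\cdot e_{i_1}\wedge\dots\wedge e_{i_r}y(\lambda')=\begin{cases}0,& i\notin\{i_1,\dots,i_r\},\\ (-1)^{r-s}e_{i_1}\wedge\dots\wedge\widehat{e_{i_s}}\wedge\dots\wedge e_{i_r}y(\lambda'+e_j),& i=i_s,\end{cases}$$ for all $i\in\{1,\dots,m\}$, $j\in\{1,\dots,n\}$ and nonzero $e_{i_1}\wedge\dots\wedge e_{i_r}y(\lambda')\in M(\lambda)$.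
   Context: $\mathfrak{gl}(m,n)$ has basis of matrix units $E_{a,b}$, $1\le a,b\le m+n$; even part $\mathfrak{gl}(m,n)_0$ spanned by $E_{a,b}$ with $a,b\le m$ or $a,b>m$, odd part by $E_{i,m+j},E_{m+j,i}$ ($i\le m$, $j\le n$); $\mathfrak{gl}(m,n)_0=\mathfrak{gl}_m\oplus\mathfrak{gl}_n$, with $\mathfrak{gl}_m=\mathrm{span}\{E_{i,k}:i,k\le m\}$ and $\mathfrak{gl}_n$ identified with $\mathrm{span}\{E_{m+l,m+j}\}$ via $E_{l,j}\mapsto E_{m+l,m+j}$. Modules are $\mathbb{Z}_2$-graded. $\Lambda(\mathbb{C}^m)=\bigoplus_{r=0}^m\Lambda^r(\mathbb{C}^m)$ with $e_1,\dots,e_m$ the standard basis of $\mathbb{C}^m$ and $\mathfrak{gl}_m$ acting naturally ($E_{i,k}e_s=\delta_{k,s}e_i$, extended as a derivation of $\wedge$; trivially on $\Lambda^0=\mathbb{C}$). For $\lambda\in\mathbb{C}^n$: $e_1,\dots,e_n$ also denotes the standard basis of $\mathbb{Z}^n$, $|\mu|=\sum_j\mu_j$; $S(\lambda)=X_1\times\dots\times X_n$ with $X_j=\lambda_j+\mathbb{Z}$ if $\lambda_j\notin\mathbb{Z}$, $X_j=\mathbb{Z}_{\ge0}$ if $\lambda_j\in\mathbb{Z}_{\ge0}$, $X_j=\{-1,-2,\dots\}$ if $\lambda_j\in\{-1,-2,\dots\}$; $W(\lambda)$ has basis $\{y(\lambda'):\lambda'\in S(\lambda)\}$, with $y(\mu)=0$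 for $\mu\notin S(\lambda)$, and $\mathfrak{gl}_n$ acts by $E_{l,j}y(\lambda')=\lambda'_jy(\lambda'-e_j+e_l)$. $M(\lambda)=\Lambda(\mathbb{C}^m)\otimes W(\lambda)$ (as a $\mathfrak{gl}_m\oplus\mathfrak{gl}_n$-module), spanned by elements $e_{i_1}\wedge\dots\wedge e_{i_r}y(\lambda')$ ($\otimes$ omitted; $r=0$ gives $y(\lambda')$), with $\mathbb{Z}_2$-grading: $M(\lambda)_{\bar i}$ is spanned by those $e_{i_1}\wedge\dots\wedge e_{i_r}y(\lambda')$ with $|\lambda-\lambda'|\equiv i\pmod 2$. *)

(* Defs.v *)
(* Complex numbers are modelled as R[i] = complex R for an
   arbitrary R : realType (mathcomp-real-closed); all constructions below are
   stated over an arbitrary field C and then instantiated at C := R[i]. *)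
From HB Require Import structures.
From mathcomp Require Import all_boot all_algebra.
From mathcomp Require Export complex.
From mathcomp Require Import boolp reals.
Set Implicit Arguments. Unset Strict Implicit. Unset Printing Implicit Defensive.
Import GRing.Theory.
Local Open Scope ring_scope.

Section SuperModule.
Variables (C : fieldType) (m n : nat).

Definition isZ (x : C) : Prop := exists k : int, x = k%:~R.
Definition isN (x : C) : Prop := exists k : nat, x = k%:R.
Definition isNeg (x : C) : Prop := exists k : nat, x = - (k.+1)%:R.

Definition inX (lj x : C) : Prop :=
  [\/ ~ isZ lj /\ isZ (x - lj), isN lj /\ isN x | isNeg lj /\ isNeg x].

Definition inS (lam lam' : 'I_n -> C) : Prop := forall j, inX (lam j) (lam' j).

(* ---------- basis of M(lambda) ----------
   The vector e_{i_1} /\ ... /\ e_{i_r} y(lambda') with i_1 < ... < i_r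
   is encoded by the pair ([set i_1; ...; i_r], lambda'); such pairs with
   inS lam lambda' form a basis of M(lambda) = Lambda(C^m) (x) W(lambda). *)
Definition basis := ({set 'I_m} * {ffun 'I_n -> C})%type.

Definition comb := seq (C * basis).

Definition coef (v : comb) (b : basis) : C := \sum_(t <- v | t.2 == b) t.1.

Definition ninv (s : seq 'I_m) : nat :=
  \sum_(p < size s) \sum_(q < size s)
     ((p < q)%N && (nth 0%N (map val s) q < nth 0%N (map val s) p)%N).

(* e_{s_1} /\ ... /\ e_{s_r} = sign * e_I with I = {s_1,...,s_r} sorted
   (and = 0 if the s_k are not distinct) *)
Definition wedge (s : seq 'I_m) : C * {set 'I_m} :=
  if uniq s then ((-1) ^+ ninv s, [set x in s]) else (0, set0).

Definition mkterm (c : C) (s : seq 'I_m) (l : {ffun 'I_n -> C}) : C * basis :=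
  (c * (wedge s).1, ((wedge s).2, l)).

Definition addE (l : {ffun 'I_n -> C}) (j : 'I_n) : {ffun 'I_n -> C} :=
  [ffun k => l k + (k == j)%:R].
Definition subE (l : {ffun 'I_n -> C}) (j : 'I_n) : {ffun 'I_n -> C} :=
  [ffun k => l k - (k == j)%:R].
Definition moveE (l : {ffun 'I_n -> C}) (j k0 : 'I_n) : {ffun 'I_n -> C} :=
  [ffun k => l k - (k == j)%:R + (k == k0)%:R].

(* ---------- action of the matrix unit E_{a,c} of gl(m,n) on a basis vector
   (indices 0-based: a < m is i in {1..m}; a = m + j is m+j) ---------- *)
Definition act (a c : 'I_(m + n)) (b : basis) : comb :=
  let I := b.1 in let l := b.2 in let s := enum I in let r := #|I| in
  match split a, split c with
  | inl i, inl k =>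
      (* gl_m: derivation action on Lambda(C^m), E_{i,k} e_{s_p} = delta_{k,s_p} e_i *)
      [seq mkterm 1 (set_nth i s p i) l | p <- iota 0 r & nth i s p == k]
  | inr k0, inr j =>
      [:: (l j, (I, moveE l j k0))]
  | inl i, inr j =>
      [:: mkterm ((-1) ^+ r * l j) (i :: s) (subE l j)]
  | inr j, inl i =>
      (* E_{m+j,i}; i = s_(index i s), i.e. paper's position index i s + 1 *)
      if i \in I then [:: ((-1) ^+ (r - (index i s).+1), (I :\ i, addE l j))]
      else [::]
  end.

(* linear extension to formal combinations; terms whose basis vector is not in
   M(lambda) (i.e. y(mu) with mu notin S(lambda)) are zero and dropped *)
Definition actL (lam : 'I_n -> C) (a c : 'I_(m + n)) (v : comb) : comb :=
  flatten [seq [seq (t.1 * u.1, u.2) | u <- act a c t.2]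
          | t : C * basis <- v & `[< inS lam (fun j => t.2.2 j) >]].

(* parity of the index a (true = odd, i.e. a > m in 1-based numbering) *)
Definition ipar (a : 'I_(m + n)) : bool := (m <= a)%N.
Definition Epar (a c : 'I_(m + n)) : bool := ipar a (+) ipar c.

Definition bpar (lam : 'I_n -> C) (b : basis) (p : bool) : Prop :=
  exists k : int, \sum_(j < n) (lam j - b.2 j) = k%:~R /\ odd (absz k) = p.

End SuperModule.

(* Submission.v *)
Require Import Defs.
From mathcomp Require Import all_boot all_algebra.
From mathcomp Require Import complex reals.
From mathcomp Require Import boolp functions.
From mathcomp Require Import zify ring lra.
Import GRing.Theory.
Local Open Scope ring_scope.

Section InX.
Variable C : fieldType.

Lemma inX_sub1 (lj x : C) : inX lj x -> x != 0 -> inX lj (x - 1).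
Proof.
case=> [[nz [k hk]] | [hl [k ->]] | [hl [k ->]]] hx.
- apply: Or31; split => //; exists (k - 1).
  by rewrite rmorphB /= rmorph1 -hk addrAC.
- apply: Or32; split => //; case: k hx => [|k] hx; first by rewrite eqxx in hx.
  by exists k; rewrite mulrSr addrK.
- apply: Or33; split => //; exists k.+1.
  by rewrite -opprD -mulrSr.
Qed.

Lemma inX_add1 (lj x : C) : inX lj x -> x != -1 -> inX lj (x + 1).
Proof.
case=> [[nz [k hk]] | [hl [k ->]] | [hl [k ->]]] hx.
- apply: Or31; split => //; exists (k + 1).
  by rewrite rmorphD /= rmorph1 -hk addrAC.
- apply: Or32; split => //; exists k.+1; by rewrite mulrSr.
- apply: Or33; split => //; case: k hx => [|k] hx; first by rewrite eqxx in hx.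
  exists k; by rewrite (mulrSr _ k.+1) opprD subrK.
Qed.
End InX.


Section Ninv.
Local Open Scope nat_scope.

Definition ninvN (t : seq nat) : nat :=
  \sum_(p < size t) \sum_(q < size t) ((p < q) && (nth 0 t q < nth 0 t p)).

Lemma count_sum_nth (P : pred nat) (t : seq nat) :
  count P t = \sum_(q < size t) P (nth 0 t q).
Proof.
elim: t => [|x t IH] /=; first by rewrite big_ord0.
by rewrite big_ord_recl /= IH.
Qed.

Lemma ninvN_cons x t : ninvN (x :: t) = count (fun y => y < x) t + ninvN t.
Proof.
rewrite /ninvN /= big_ord_recl big_ord_recl /= add0n count_sum_nth; congr (_ + _).
apply: eq_bigr => p _; rewrite big_ord_recl /= add0n; apply: eq_bigr => q _.
by rewrite /bump /= !add1n ltnS.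
Qed.

Lemma sorted_cons_count x t : sorted ltn (x :: t) -> count (fun y => y < x) t = 0.
Proof.
move=> /= h; have := order_path_min ltn_trans h => /allP hall.
rewrite (eq_in_count (a2 := pred0)) ?count_pred0 // => y /hall /= hy.
by rewrite ltnNge ltnW.
Qed.

Lemma ninvN_sorted t : sorted ltn t -> ninvN t = 0.
Proof.
elim: t => [|x t IH] h; first by rewrite /ninvN big_ord0.
rewrite ninvN_cons sorted_cons_count // IH //; exact: path_sorted h.
Qed.

Lemma ninvN_ins a b x : sorted ltn (a ++ b) ->
  ninvN (a ++ x :: b) = count (fun y => x < y) a + count (fun y => y < x) b.
Proof.
elim: a => [|y a IH] /= h.
  by rewrite ninvN_cons ninvN_sorted // addn0.
rewrite ninvN_cons IH ?(path_sorted h) // count_cat /=.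
have := sorted_cons_count _ _ h; rewrite count_cat => /eqP; rewrite addn_eq0 => /andP[/eqP-> /eqP->].
by rewrite add0n addn0 addnA.
Qed.

Lemma count_lt_gt a x : x \notin a ->
  count (fun y => x < y) a + count (fun y => y < x) a = size a.
Proof.
elim: a => [|y a IH] //=; rewrite inE negb_or => /andP[ne /IH <-].
rewrite addnACA -[X in _ = X]add1n; congr (_ + _); case: ltngtP => //= e.
by rewrite e eqxx in ne.
Qed.

Lemma xxx : True. Proof. by []. Qed.
Lemma count_index_sorted t k : sorted ltn t -> k \in t ->
  count (fun y => y < k) t = index k t.
Proof.
elim: t => [|y t IH] //= h hk.
have /allP hall := order_path_min ltn_trans h.
have [e|ne] := eqVneq y k.
  by rewrite -e ltnn add0n (sorted_cons_count _ _ h)  ?eqxx.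
move: hk; rewrite inE eq_sym (negbTE ne) /= => hk.
by rewrite (hall _ hk) IH // (path_sorted h).
Qed.
End Ninv.

Section Ext.
Variable m : nat.
Implicit Types (I : {set 'I_m}) (i k : 'I_m).

Definition cnt i I : nat := #|[set x in I | (x < i)%N]|.



Lemma count_enum_set (P : pred 'I_m) I : count P (enum I) = #|[set x in I | P x]|.
Proof.
rewrite -size_filter cardE /enum_mem -filter_predI; apply: congr1; apply: eq_filter => x.
by rewrite !inE /= andbC.
Qed.

Lemma sorted_enum I : sorted ltn (map val (enum I)).
Proof.
rewrite /enum_mem -enumT; apply: (@subseq_sorted _ _ ltn_trans _ (map val (enum 'I_m))).
  by apply: map_subseq; apply: filter_subseq.
by rewrite val_enum_ord iota_ltn_sorted.
Qed.

Lemma cnt_count i I : cnt i I = count (fun y : 'I_m => (y < i)%N) (enum I).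
Proof. by rewrite count_enum_set. Qed.

Lemma cntU k i I : k \notin I -> cnt i (k |: I) = ((k < i)%N + cnt i I)%N.
Proof.
move=> kI; rewrite /cnt.
have -> : [set x in k |: I | (x < i)%N] =
   if (k < i)%N then k |: [set x in I | (x < i)%N] else [set x in I | (x < i)%N].
  case: ifP => h; apply/setP => x; rewrite !inE; case: eqP => [->|] //=.
  by rewrite h andbF.
case: ifP => h; last by rewrite add0n.
by rewrite cardsU1 inE (negbTE kI).
Qed.

Lemma cntD k i I : k \in I -> cnt i I = ((k < i)%N + cnt i (I :\ k))%N.
Proof.
by move=> kI; rewrite -cntU ?setD1K // !inE eqxx.
Qed.

Lemma cnt_U1self i I : cnt i (i |: I) = cnt i I.
Proof.
rewrite /cnt; apply: eq_card => x; rewrite !inE; case: eqP => [->|] //=.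
by rewrite ltnn andbF.
Qed.

Lemma cnt_D1self i I : cnt i (I :\ i) = cnt i I.
Proof.
rewrite /cnt; apply: eq_card => x; rewrite !inE; case: eqP => [->|] //=.
by rewrite ltnn andbF.
Qed.

Lemma cnt_index k I : k \in I -> index k (enum I) = cnt k I.
Proof.
move=> kI; rewrite cnt_count -(index_map val_inj) -(count_map val (fun y => y < k)%N).
by rewrite count_index_sorted ?sorted_enum // map_f // mem_enum.
Qed.

Lemma ninvE (s : seq 'I_m) : ninv s = ninvN (map val s).
Proof. by rewrite /ninv /ninvN size_map. Qed.

Lemma perm_ins (T : eqType) (a b : seq T) x : perm_eq (a ++ x :: b) (x :: a ++ b).
Proof. by have := perm_catCA a [:: x] b; move=> /(_ (x :: a ++ b)) /= ->. Qed.

Variable C : fieldType.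

Lemma wedge_cons i I : wedge C (i :: enum I) =
  if i \in I then (0%R, set0) else (((-1) ^+ cnt i I)%R, i |: I).
Proof.
rewrite /wedge /= enum_uniq andbT mem_enum; case: (i \in I) => //=.
rewrite ninvE /= ninvN_cons ninvN_sorted ?sorted_enum // addn0 count_map cnt_count.
congr (_, _); apply/setP => x; by rewrite !inE mem_enum.
Qed.

Lemma wedge_set_nth i k I : k \in I ->
  wedge C (set_nth i (enum I) (index k (enum I)) i) =
  if i \in I :\ k then (0%R, set0)
  else (((-1) ^+ (cnt k I + cnt i (I :\ k)))%R, i |: (I :\ k)).
Proof.
move=> kI.
have ci := @cntD k i I kI.
have ck := @cnt_index k I kI.
rewrite cnt_count in ci.
have memD : forall x, (x \in I :\ k) = (x != k) && (x \in enum I).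
  by move=> x; rewrite !inE mem_enum.
rewrite -ck.
have hs := sorted_enum I; have us := enum_uniq I.
have kin : k \in enum I by rewrite mem_enum.
move: (enum I) hs us memD kin ci => s hs us memD kin ci.
case/splitPr: kin memD hs us ci => a b memD hs us ci.
have us' : uniq (k :: a ++ b) by rewrite -(perm_uniq (perm_ins _ a b k)).
move: us' => /= /andP[kab uab].
have ka : k \notin a by apply: contra kab; rewrite mem_cat => ->.
have memD' : forall x, (x \in I :\ k) = (x \in a ++ b).
  move=> x; rewrite memD mem_cat inE mem_cat; case: eqP => [->|] /=.
    by rewrite (negbTE ka); move: kab; rewrite mem_cat negb_or => /andP[_ /negbTE ->].
  by [].
have -> : index k (a ++ k :: b) = size a by rewrite index_cat (negbTE ka) /= eqxx addn0.
have -> : set_nth i (a ++ k :: b) (size a) i = a ++ i :: b.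
  rewrite set_nthE size_cat /= -{1}(addn0 (size a)) ltn_add2l /=.
  rewrite take_size_cat // drop_cat ltnNge leqnSn /= subSnn /=; by rewrite drop0.
rewrite /wedge (perm_uniq (perm_ins _ a b i)) /= uab andbT memD'.
case: (boolP (i \in a ++ b)) => iab //=.
congr (_, _); last first.
  apply/setP => x; rewrite in_set in_setU1 memD' !mem_cat inE; by rewrite orbCA.
have hs' : sorted ltn (map val a ++ map val b).
  apply: (subseq_sorted ltn_trans (s2 := map val a ++ val k :: map val b)).
    by apply: cat_subseq => //; apply: subseq_cons.
  by move: hs; rewrite map_cat.
rewrite ninvE map_cat /= ninvN_ins //.
rewrite -signr_odd -[in RHS]signr_odd; congr (_ ^+ _)%R.
move: ci; rewrite !count_cat /= count_map => ci.
have hia : val i \notin map val a.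
  apply: contra iab; rewrite mem_cat => /mapP[x xa /val_inj ->]; by rewrite xa.
have := count_lt_gt _ _ hia; rewrite size_map !count_map => hal.
congr (nat_of_bool _). change (odd (count (fun y : 'I_m => (i < y)%N) a + count (fun y : 'I_m => (y < i)%N) b)%N = odd (size a + cnt i (I :\ k))%N).
have hal' : (count (fun y : 'I_m => (i < y)%N) a + count (fun y : 'I_m => (y < i)%N) a = size a)%N := hal.
move: ci hal'.
move: (count (fun y : 'I_m => (i < y)%N) a) (count (fun y : 'I_m => (y < i)%N) a) (count (fun y : 'I_m => (y < i)%N) b) (cnt i (I :\ k)) (k < i)%N.
move=> A L Bc c' ki ci hal'.
have e : (A + Bc + 2 * L = size a + c')%N.
  have e1 : c' = (L + Bc)%N.
    by apply/eqP; rewrite -(eqn_add2l ki) -ci addnCA.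
  by rewrite e1 -hal'; lia.
by rewrite -e oddD [odd (_ + 2 * L)]oddD oddM andFb addbF oddD.
Qed.
End Ext.
Arguments cnt {m} i I.


Section Ops.
Variables (C : fieldType) (m n : nat) (lam : 'I_n -> C).
Local Notation B := (basis C m n).
Local Notation V := (B -> C).
Local Notation L := ({ffun 'I_n -> C}).

Definition inSb (l : L) : bool := `[< inS lam (fun j => l j) >].
Definition mask (x : B) : C := (inSb x.2)%:R.
Definition eps (i : 'I_m) (I : {set 'I_m}) : C := (i \notin I)%:R * (-1) ^+ cnt i I.
Definition iot (i : 'I_m) (I : {set 'I_m}) : C := (i \in I)%:R * (-1) ^+ cnt i I.

Inductive elop := OE of 'I_m | OI of 'I_m | OP | OM | OD of 'I_n | OX of 'I_n.

Definition wt (o : elop) (x : B) : C :=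
  match o with
  | OE i => mask x * eps i x.1
  | OI k => mask x * iot k x.1
  | OP => mask x * (-1) ^+ #|x.1|
  | OM => mask x
  | OD j => mask x * (inSb (subE x.2 j))%:R * x.2 j
  | OX j => mask x * (inSb (addE x.2 j))%:R
  end.

Definition tg (o : elop) (x : B) : B :=
  match o with
  | OE i => (i |: x.1, x.2)
  | OI k => (x.1 :\ k, x.2)
  | OP => x
  | OM => x
  | OD j => (x.1, subE x.2 j)
  | OX j => (x.1, addE x.2 j)
  end.

Definition O (o : elop) (f : V) : V := fun x => wt o x * f (tg o x).

Lemma OE_ o f x : O o f x = wt o x * f (tg o x). Proof. by []. Qed.

Lemma O_D o (f g : V) : O o (f + g) = O o f + O o g.
Proof. by apply/funext => x; rewrite /O /= mulrDr. Qed.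
Lemma O_N o (f : V) : O o (- f) = - O o f.
Proof. by apply/funext => x; rewrite /O /= mulrN. Qed.
Lemma O_B o (f g : V) : O o (f - g) = O o f - O o g.
Proof. by rewrite O_D O_N. Qed.
Definition sc (a : C) (f : V) : V := fun x => a * f x.
Lemma O_Z o (a : C) (f : V) : O o (sc a f) = sc a (O o f).
Proof. by apply/funext => x; rewrite /O /sc /= mulrCA. Qed.

Lemma mask_idem x : mask x * mask x = mask x.
Proof. by rewrite /mask; case: (inSb _); rewrite ?mulr1 ?mulr0. Qed.

Lemma wt_mask o x : mask x * wt o x = wt o x.
Proof. by case: o => * /=; rewrite ?mulrA mask_idem. Qed.

Lemma wt_mask_tg o x : wt o x * mask (tg o x) = wt o x.
Proof.
case: o => [i|k| | |j|j] /=; rewrite /mask /=; case: (inSb x.2); rewrite /= ?(mulr0, mul0r, mulr1, mul1r) //.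
all: try by case: (inSb (subE _ _)); rewrite /= ?(mulr0, mul0r, mulr1, mul1r).
all: try by case: (inSb (addE _ _)); rewrite /= ?(mulr0, mul0r, mulr1, mul1r).
Qed.


Lemma O_M o f : O o (O OM f) = O o f.
Proof. by apply/funext => x; rewrite /O /= mulrA wt_mask_tg. Qed.
Lemma M_O o f : O OM (O o f) = O o f.
Proof. by apply/funext => x; rewrite /O /= mulrA wt_mask. Qed.

Lemma fN (g : V) x : (- g) x = - g x. Proof. by []. Qed.
Lemma fD (g h : V) x : (g + h) x = g x + h x. Proof. by []. Qed.
Lemma fB (g h : V) x : (g - h) x = g x - h x. Proof. by []. Qed.
Lemma fsc a (g : V) x : sc a g x = a * g x. Proof. by []. Qed.

Lemma sgn2 (b : bool) : (-1) ^+ b * (-1) ^+ b = 1 :> C.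
Proof. by case: b; rewrite ?expr1 ?expr0 ?mulr1 ?mulrNN ?mulr1. Qed.

Lemma b2 (b : bool) : (b%:R * b%:R : C) = b%:R.
Proof. by case: b; rewrite ?mulr1 ?mulr0. Qed.

Lemma eps_swap i k I : i != k ->
  eps i I * eps k (i |: I) = - (eps k I * eps i (k |: I)).
Proof.
move=> ne; rewrite /eps !in_setU1 (negbTE ne) eq_sym (negbTE ne) /=.
case: (boolP (i \in I)) => hi; case: (boolP (k \in I)) => hk /=;
  rewrite ?(mul0r, mulr0, oppr0) //.
rewrite !cntU // !mul1r !exprD.
have ne' : (i : nat) != k by apply: contra ne => /eqP/val_inj ->.
case: ltngtP ne' => // h _; rewrite /= ?expr0 ?expr1; ring.
Qed.

Lemma iot_swap i k I : i != k ->
  iot i I * iot k (I :\ i) = - (iot k I * iot i (I :\ k)).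
Proof.
move=> ne; rewrite /iot !in_setD1 (negbTE ne) eq_sym (negbTE ne) /=.
case: (boolP (i \in I)) => hi; case: (boolP (k \in I)) => hk /=;
  rewrite ?(mul0r, mulr0, oppr0) //.
rewrite [cnt k I](@cntD _ i k I hi) [cnt i I](@cntD _ k i I hk) !mul1r !exprD.
have ne' : (i : nat) != k by apply: contra ne => /eqP/val_inj ->.
case: ltngtP ne' => // h _; rewrite /= ?expr0 ?expr1; ring.
Qed.

Lemma R_EE i k f : O (OE i) (O (OE k) f) = - O (OE k) (O (OE i) f).
Proof.
apply/funext => -[I l]; rewrite ?fB ?fD ?fN ?fsc /O /= /mask /=.
have [<-|ne] := eqVneq i k.
  by rewrite /eps !setU11 /= !(mul0r, mulr0, oppr0).
rewrite setUCA; have e := @eps_swap i k I ne.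
transitivity ((inSb l)%:R * (inSb l)%:R * (eps i I * eps k (i |: I)) * f (i |: (k |: I), l)); first by ring.
rewrite e; ring.
Qed.

Lemma R_II i k f : O (OI i) (O (OI k) f) = - O (OI k) (O (OI i) f).
Proof.
apply/funext => -[I l]; rewrite ?fB ?fD ?fN ?fsc /O /= /mask /=.
have [<-|ne] := eqVneq i k.
  by rewrite /iot !setD11 /= !(mul0r, mulr0, oppr0).
have -> : I :\ k :\ i = I :\ i :\ k by apply/setP => x; rewrite !inE andbCA.
have e := @iot_swap i k I ne.
transitivity ((inSb l)%:R * (inSb l)%:R * (iot i I * iot k (I :\ i)) * f (I :\ i :\ k, l)); first by ring.
rewrite e; ring.
Qed.


Lemma sign_cases (e : nat) : (-1) ^+ e = 1 :> C \/ (-1) ^+ e = -1 :> C.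
Proof. by rewrite -signr_odd; case: (odd e); [right; rewrite expr1 | left; rewrite expr0]. Qed.

Ltac sgn_elim := repeat match goal with |- context [(-1) ^+ ?e] => case: (sign_cases e) => -> end.

Lemma sgnn2 (c : nat) : (-1) ^+ c * (-1) ^+ c = 1 :> C.
Proof. by rewrite -signr_odd; case: (odd c); rewrite ?expr1 ?expr0 ?mulrNN ?mulr1. Qed.

Lemma ie_swap i k I : i != k ->
  iot k I * eps i (I :\ k) = - (eps i I * iot k (i |: I)).
Proof.
move=> ne; rewrite /eps /iot in_setD1 in_setU1 ne eq_sym (negbTE ne) /=.
case: (boolP (i \in I)) => hi; case: (boolP (k \in I)) => hk /=;
  rewrite ?(mul0r, mulr0, oppr0) //.
rewrite [cnt i I](@cntD _ k i I hk) [cnt k (i |: I)](@cntU _ i k I hi) !mul1r !exprD.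
have ne' : (i : nat) != k by apply: contra ne => /eqP/val_inj ->.
case: ltngtP ne' => // h _; rewrite /= ?expr0 ?expr1; ring.
Qed.

Lemma R_IE i k f : O (OI k) (O (OE i) f) = sc (i == k)%:R (O OM f) - O (OE i) (O (OI k) f).
Proof.
apply/funext => -[I l]; rewrite ?fB ?fD ?fN ?fsc /O /= /mask /=.
have [<-|ne] := eqVneq i k.
  rewrite ?eqxx /eps /iot; case: (boolP (i \in I)) => hi.
    rewrite setD1K // !inE eqxx /= cnt_D1self ?hi /=.
    by case: (inSb l); sgn_elim; rewrite /=; ring.
  rewrite setU1K // !inE eqxx (negbTE hi) /= cnt_U1self.
  by case: (inSb l); sgn_elim; rewrite /=; ring.
have -> : (i |: I) :\ k = i |: (I :\ k).
  apply/setP => x; rewrite !inE; case: (eqVneq x i) => [->|] /=; by rewrite ?ne.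
have e := @ie_swap i k I ne.
rewrite ?(negbTE ne) /=.
transitivity ((inSb l)%:R * (inSb l)%:R * (iot k I * eps i (I :\ k)) * f (i |: (I :\ k), l)); first by ring.
rewrite e; ring.
Qed.

Lemma R_PE i f : O OP (O (OE i) f) = - O (OE i) (O OP f).
Proof.
apply/funext => -[I l]; rewrite ?fB ?fD ?fN ?fsc /O /= /mask /= /eps.
case: (boolP (i \in I)) => hi /=; first by rewrite !(mul0r, mulr0, oppr0).
rewrite cardsU1 hi exprD expr1; ring.
Qed.

Lemma R_PI k f : O OP (O (OI k) f) = - O (OI k) (O OP f).
Proof.
apply/funext => -[I l]; rewrite ?fB ?fD ?fN ?fsc /O /= /mask /= /iot.
case: (boolP (k \in I)) => hk /=; last by rewrite !(mul0r, mulr0, oppr0).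
rewrite [#|I|](cardsD1 k) hk exprD expr1; ring.
Qed.

Lemma R_PP f : O OP (O OP f) = O OM f.
Proof.
apply/funext => -[I l]; rewrite /O /= /mask /=.
set b := (inSb l)%:R; set c := (-1) ^+ _.
transitivity (b * b * (c * c) * f (I, l)); first by ring.
by rewrite sgnn2 b2 mulr1.
Qed.

Ltac commtac := apply/funext => -[I l]; rewrite /O /= /mask /=;
  repeat match goal with |- context [inSb ?x] => case: (inSb x) end; rewrite /=; ring.

Lemma C_ED i j f : O (OE i) (O (OD j) f) = O (OD j) (O (OE i) f). Proof. commtac. Qed.
Lemma C_EX i j f : O (OE i) (O (OX j) f) = O (OX j) (O (OE i) f). Proof. commtac. Qed.
Lemma C_ID i j f : O (OI i) (O (OD j) f) = O (OD j) (O (OI i) f). Proof. commtac. Qed.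
Lemma C_IX i j f : O (OI i) (O (OX j) f) = O (OX j) (O (OI i) f). Proof. commtac. Qed.
Lemma C_PD j f : O OP (O (OD j) f) = O (OD j) (O OP f). Proof. commtac. Qed.
Lemma C_PX j f : O OP (O (OX j) f) = O (OX j) (O OP f). Proof. commtac. Qed.


Lemma inSb_subE (l : L) j : inSb l -> l j != 0 -> inSb (subE l j).
Proof.
move=> /asboolP h nz; apply/asboolP => k; rewrite ffunE.
case: (eqVneq k j) => [->|ne] /=; first exact: inX_sub1.
by rewrite subr0.
Qed.

Lemma inSb_addE (l : L) j : inSb l -> l j != -1 -> inSb (addE l j).
Proof.
move=> /asboolP h nz; apply/asboolP => k; rewrite ffunE.
case: (eqVneq k j) => [->|ne] /=; first exact: inX_add1.
by rewrite addr0.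
Qed.

Lemma inSb_mix (f g l : L) : inSb l -> inSb g -> (forall k, f k = g k \/ f k = l k) -> inSb f.
Proof.
move=> /asboolP hl /asboolP hg h; apply/asboolP => k.
by case: (h k) => ->.
Qed.

Lemma subE_comm (l : L) j k : subE (subE l j) k = subE (subE l k) j.
Proof. by apply/ffunP => x; rewrite !ffunE; ring. Qed.
Lemma addE_comm (l : L) j k : addE (addE l j) k = addE (addE l k) j.
Proof. by apply/ffunP => x; rewrite !ffunE; ring. Qed.
Lemma subE_addE (l : L) j k : subE (addE l k) j = addE (subE l j) k.
Proof. by apply/ffunP => x; rewrite !ffunE; ring. Qed.
Lemma subE_addE_same (l : L) j : subE (addE l j) j = l.
Proof. by apply/ffunP => x; rewrite !ffunE addrK. Qed.
Lemma moveE_eq (l : L) j k : moveE l j k = addE (subE l j) k.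
Proof. by apply/ffunP => x; rewrite !ffunE. Qed.

Lemma R_DD j k f : O (OD j) (O (OD k) f) = O (OD k) (O (OD j) f).
Proof.
apply/funext => -[I l]; rewrite /O /= /mask /= subE_comm !ffunE.
case hb: (inSb l); rewrite /= ?(mul0r, mulr0) //.
have [<-|ne] := eqVneq j k; first by [].
rewrite (_ : (false%:R : C) = 0) // !subr0.
have [->|nz] := eqVneq (l j) 0; first by rewrite !(mul0r, mulr0).
have [->|nz'] := eqVneq (l k) 0; first by rewrite !(mul0r, mulr0).
by rewrite (@inSb_subE _ _ hb nz) (@inSb_subE _ _ hb nz'); ring.
Qed.

Lemma R_XX j k f : O (OX j) (O (OX k) f) = O (OX k) (O (OX j) f).
Proof.
apply/funext => -[I l]; rewrite /O /= /mask /= addE_comm.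
case hb: (inSb l); rewrite /= ?(mul0r, mulr0) //.
have [<-|ne] := eqVneq j k; first by [].
case hT: (inSb (addE (addE l k) j)); rewrite /= ?(mul0r, mulr0) //.
rewrite (@inSb_mix (addE l j) (addE (addE l k) j) l) ?hb ?hT //; last first.
  move=> x; rewrite !ffunE; case: (eqVneq x k) => [->|_]; last by left; rewrite addr0.
  by right; rewrite [k == j]eq_sym (negbTE ne) addr0.
rewrite (@inSb_mix (addE l k) (addE (addE l k) j) l) ?hb ?hT //.
move=> x; rewrite !ffunE; case: (eqVneq x j) => [->|_]; last by left; rewrite addr0.
by right; rewrite (negbTE ne) addr0.
Qed.


Lemma tR : (true%:R : C) = 1. Proof. by []. Qed.
Lemma fR : (false%:R : C) = 0. Proof. by []. Qed.
Ltac rg := rewrite ?tR ?fR; ring.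

Lemma addE_subE_same (l : L) j : addE (subE l j) j = l.
Proof. by apply/ffunP => x; rewrite !ffunE subrK. Qed.

Lemma R_XD l0 j f : O (OX l0) (O (OD j) f) = O (OD j) (O (OX l0) f) + sc (j == l0)%:R (O OM f).
Proof.
apply/funext => -[I l]; rewrite ?fD ?fsc /O /= /mask /=.
case hb: (inSb l); rewrite /= ?(mul0r, mulr0, addr0) //.
have [<-|ne] := eqVneq j l0.
  rewrite subE_addE_same addE_subE_same hb !ffunE eqxx /=.
  have [z|nz] := eqVneq (l j) 0.
    rewrite (@inSb_addE _ _ hb); last by rewrite z eq_sym oppr_eq0 oner_neq0.
    rewrite z; rg.
  rewrite (@inSb_subE _ _ hb nz).
  have [z'|nz'] := eqVneq (l j) (-1); first by rewrite z'; rg.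
  rewrite (@inSb_addE _ _ hb nz'); rg.
rewrite subE_addE !ffunE (negbTE ne) addr0.
have [z|nz] := eqVneq (l j) 0; first by rewrite z; rg.
rewrite (@inSb_subE _ _ hb nz).
case hT: (inSb (addE (subE l j) l0)); rewrite /= ?(mul0r, mulr0) //; last by rg.
rewrite (@inSb_mix (addE l l0) (addE (subE l j) l0) l) ?hb ?hT //; first by rg.
move=> x; rewrite !ffunE; case: (eqVneq x j) => [->|nxj].
  by right; rewrite (negbTE ne) addr0.
by left; rewrite fR subr0.
Qed.

End Ops.


Section Cases.
Variables (C : fieldType) (m n : nat) (lam : 'I_n -> C).
Local Notation B := (basis C m n).
Local Notation V := (B -> C).
Local Notation OO := (@O C m n lam).
Local Notation Ee i := (OO (OE _ _ i)).
Local Notation Ii i := (OO (OI _ _ i)).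
Local Notation Pp := (OO (OP m n)).
Local Notation Mm := (OO (OM m n)).
Local Notation Dd j := (OO (OD _ _ j)).
Local Notation Xx j := (OO (OX _ _ j)).
Local Notation sc := (@sc C m n).

Definition Comp (u v : 'I_m + 'I_n) (f : V) : V :=
  match u, v with
  | inl i, inl k => Ii k (Ee i f)
  | inr k0, inr j => Dd j (Xx k0 f)
  | inl i, inr j => Dd j (Pp (Ee i f))
  | inr j, inl i => Ii i (Pp (Xx j f))
  end.

Definition isr (u : 'I_m + 'I_n) : bool := if u is inr _ then true else false.
Definition sg (u v u' v' : 'I_m + 'I_n) : C :=
  (-1) ^+ ((isr u (+) isr v) && (isr u' (+) isr v')).

Definition MI u v u' v' := forall f,
  Comp u' v' (Comp u v f) - sc (sg u v u' v') (Comp u v (Comp u' v' f)) =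
  sc (v == u')%:R (Comp u v' f) - sc (sg u v u' v' * (v' == u)%:R) (Comp u' v f).

Lemma MI_sym u v u' v' : MI u v u' v' -> MI u' v' u v.
Proof.
move=> h f; apply/funext => x; have := congr1 (fun F => F x) (h f).
have hs : sg u' v' u v = sg u v u' v' by rewrite /sg andbC.
rewrite !(fB, fD, fN, fsc) hs.
move/eqP; rewrite -subr_eq0 => /eqP e; apply/eqP; rewrite -subr_eq0; apply/eqP.
move: e; rewrite /sg.
case: (sign_cases C ((isr u (+) isr v) && (isr u' (+) isr v'))) => -> e.
  by rewrite -[RHS](mulr0 (-1)) -e; ring.
by rewrite -[RHS](mulr0 1) -e; ring.
Qed.


Lemma eq_ll (x y : 'I_m) : (inl x == inl y :> 'I_m + 'I_n) = (x == y). Proof. by []. Qed.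
Lemma eq_rr (x y : 'I_n) : (inr x == inr y :> 'I_m + 'I_n) = (x == y). Proof. by []. Qed.
Lemma eq_lr (x : 'I_m) (y : 'I_n) : (inl x == inr y :> 'I_m + 'I_n) = false. Proof. by []. Qed.
Lemma eq_rl (x : 'I_n) (y : 'I_m) : (inr x == inl y :> 'I_m + 'I_n) = false. Proof. by []. Qed.

Lemma R_EI i k f : Ee i (Ii k f) = sc (i == k)%:R (Mm f) - Ii k (Ee i f).
Proof. rewrite R_IE; apply/funext => x; rewrite !(fB, fD, fN, fsc); ring. Qed.
Lemma E_P i f : Ee i (Pp f) = - Pp (Ee i f).
Proof. by rewrite R_PE opprK. Qed.
Lemma I_P i f : Ii i (Pp f) = - Pp (Ii i f).
Proof. by rewrite R_PI opprK. Qed.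
Lemma D_X a j f : Dd j (Xx a f) = Xx a (Dd j f) - sc (j == a)%:R (Mm f).
Proof. rewrite R_XD; apply/funext => x; rewrite !(fB, fD, fN, fsc); ring. Qed.

Ltac wout := repeat first [rewrite C_ED | rewrite C_EX | rewrite C_ID | rewrite C_IX
                          | rewrite C_PD | rewrite C_PX].
Ltac pin := repeat first [rewrite R_PE | rewrite R_PI | rewrite R_PP | rewrite O_N
                         | rewrite O_M | rewrite opprK].
Ltac fin := apply/funext => x; repeat first [rewrite fB | rewrite fD | rewrite fN | rewrite fsc]; ring.

Lemma MI_FFFF i k i' k' : MI (inl i) (inl k) (inl i') (inl k').
Proof.
move=> f; rewrite /Comp /sg /= ?eq_ll ?eq_rr ?eq_lr ?eq_rl ?expr0 ?expr1.
have h1 : Ii k' (Ee i' (Ii k (Ee i f))) = sc (i' == k)%:R (Ii k' (Ee i f)) - Ii k' (Ii k (Ee i' (Ee i f))).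
  by rewrite R_EI O_B O_Z O_M.
have h2 : Ii k' (Ii k (Ee i' (Ee i f))) = Ii k (Ii k' (Ee i (Ee i' f))).
  by rewrite (@R_II _ _ _ _ k' k) (@R_EE _ _ _ _ i' i) !O_N opprK.
have h3 : Ii k (Ii k' (Ee i (Ee i' f))) = sc (i == k')%:R (Ii k (Ee i' f)) - Ii k (Ee i (Ii k' (Ee i' f))).
  by rewrite (@R_IE _ _ _ _ i k') O_B O_Z O_M.
rewrite h1 h2 h3 [k == i']eq_sym [k' == i]eq_sym; fin.
Qed.

Lemma MI_BBBB a b c d : MI (inr a) (inr b) (inr c) (inr d).
Proof.
move=> f; rewrite /Comp /sg /= ?eq_ll ?eq_rr ?eq_lr ?eq_rl ?expr0 ?expr1.
have h1 : Dd d (Xx c (Dd b (Xx a f))) = Dd d (Dd b (Xx c (Xx a f))) + sc (b == c)%:R (Dd d (Xx a f)).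
  by rewrite (@R_XD _ _ _ _ c b) O_D O_Z O_M.
have h2 : Dd d (Dd b (Xx c (Xx a f))) = Dd b (Dd d (Xx a (Xx c f))).
  by rewrite (@R_DD _ _ _ _ d b) (@R_XX _ _ _ _ c a).
have h3 : Dd b (Dd d (Xx a (Xx c f))) = Dd b (Xx a (Dd d (Xx c f))) - sc (d == a)%:R (Dd b (Xx c f)).
  by rewrite (@D_X a d) O_B O_Z O_M.
rewrite h1 h2 h3; fin.
Qed.

Lemma MI_FFBB i k a b : MI (inl i) (inl k) (inr a) (inr b).
Proof.
move=> f; rewrite /Comp /sg /= ?eq_ll ?eq_rr ?eq_lr ?eq_rl ?expr0 ?expr1.
have h : Ii k (Ee i (Dd b (Xx a f))) = Dd b (Xx a (Ii k (Ee i f))) by wout.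
rewrite h; fin.
Qed.

Lemma MI_FFFB i k i' j : MI (inl i) (inl k) (inl i') (inr j).
Proof.
move=> f; rewrite /Comp /sg /= ?eq_ll ?eq_rr ?eq_lr ?eq_rl ?expr0 ?expr1.
have h1 : Dd j (Pp (Ee i' (Ii k (Ee i f)))) = sc (i' == k)%:R (Dd j (Pp (Ee i f))) - Dd j (Pp (Ii k (Ee i' (Ee i f)))).
  by rewrite (@R_EI i' k) !O_B !O_Z !O_M.
have h2 : Dd j (Pp (Ii k (Ee i' (Ee i f)))) = - Dd j (Pp (Ii k (Ee i (Ee i' f)))).
  by rewrite (@R_EE _ _ _ _ i' i) !O_N.
have h3 : Ii k (Ee i (Dd j (Pp (Ee i' f)))) = Dd j (Pp (Ii k (Ee i (Ee i' f)))).
  by wout; rewrite E_P ?O_N I_P ?O_N ?opprK.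
rewrite h1 h2 h3 [k == i']eq_sym; fin.
Qed.

Lemma MI_FFBF i k j i' : MI (inl i) (inl k) (inr j) (inl i').
Proof.
move=> f; rewrite /Comp /sg /= ?eq_ll ?eq_rr ?eq_lr ?eq_rl ?expr0 ?expr1.
have h1 : Xx j (Ii k (Ee i f)) = Ii k (Ee i (Xx j f)) by rewrite C_EX C_IX.
have h2 : Pp (Ii k (Ee i (Xx j f))) = Ii k (Ee i (Pp (Xx j f))) by rewrite R_PI R_PE O_N opprK.
have h3 : Ii i' (Ii k (Ee i (Pp (Xx j f)))) =
   Ii k (Ee i (Ii i' (Pp (Xx j f)))) - sc (i == i')%:R (Ii k (Pp (Xx j f))).
  rewrite (@R_II _ _ _ _ i' k) (@R_IE _ _ _ _ i i') O_B O_Z O_M; fin.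
rewrite h1 h2 h3 [i' == i]eq_sym; fin.
Qed.


Lemma MI_FBFB i j i' j' : MI (inl i) (inr j) (inl i') (inr j').
Proof.
move=> f; rewrite /Comp /sg /= ?eq_ll ?eq_rr ?eq_lr ?eq_rl ?expr0 ?expr1.
have h1 : Dd j' (Pp (Ee i' (Dd j (Pp (Ee i f))))) = - Dd j' (Dd j (Ee i' (Ee i f))).
  by wout; rewrite E_P ?O_N R_PP ?O_M.
have h2 : Dd j (Pp (Ee i (Dd j' (Pp (Ee i' f))))) = - Dd j (Dd j' (Ee i (Ee i' f))).
  by wout; rewrite E_P ?O_N R_PP ?O_M.
have h3 : Dd j' (Dd j (Ee i' (Ee i f))) = - Dd j (Dd j' (Ee i (Ee i' f))).
  by rewrite (@R_DD _ _ _ _ j' j) (@R_EE _ _ _ _ i' i) ?O_N.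
rewrite h1 h2 h3; fin.
Qed.

Lemma MI_BFBF j i j' i' : MI (inr j) (inl i) (inr j') (inl i').
Proof.
move=> f; rewrite /Comp /sg /= ?eq_ll ?eq_rr ?eq_lr ?eq_rl ?expr0 ?expr1.
have h1 : Ii i' (Pp (Xx j' (Ii i (Pp (Xx j f))))) = - Xx j' (Xx j (Ii i' (Ii i f))).
  by wout; rewrite R_PI ?O_N R_PP ?O_M.
have h2 : Ii i (Pp (Xx j (Ii i' (Pp (Xx j' f))))) = - Xx j (Xx j' (Ii i (Ii i' f))).
  by wout; rewrite R_PI ?O_N R_PP ?O_M.
have h3 : Xx j' (Xx j (Ii i' (Ii i f))) = - Xx j (Xx j' (Ii i (Ii i' f))).
  by rewrite (@R_XX _ _ _ _ j' j) (@R_II _ _ _ _ i' i) ?O_N.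
rewrite h1 h2 h3; fin.
Qed.

Lemma MI_FBBF i j j' i' : MI (inl i) (inr j) (inr j') (inl i').
Proof.
move=> f; rewrite /Comp /sg /= ?eq_ll ?eq_rr ?eq_lr ?eq_rl ?expr0 ?expr1.
have h1 : Ii i' (Pp (Xx j' (Dd j (Pp (Ee i f))))) =
    Dd j (Xx j' (Ii i' (Ee i f))) + sc (j == j')%:R (Ii i' (Ee i f)).
  rewrite (@R_XD _ _ _ _ j' j) !O_D !O_Z !O_M R_PP O_M.
  by wout; rewrite R_PP O_M.
have h2 : Dd j (Pp (Ee i (Ii i' (Pp (Xx j' f))))) = Dd j (Xx j' (Ee i (Ii i' f))).
  by wout; rewrite R_PE ?O_N R_PI ?O_N ?opprK R_PP ?O_M.
have h4 : Dd j (Xx j' (Ii i' (Ee i f))) = sc (i == i')%:R (Dd j (Xx j' f)) - Dd j (Xx j' (Ee i (Ii i' f))).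
  by rewrite (@R_IE _ _ _ _ i i') !O_B !O_Z !O_M.
rewrite h1 h2 h4 [i' == i]eq_sym; fin.
Qed.

Lemma MI_FBBB i j a b : MI (inl i) (inr j) (inr a) (inr b).
Proof.
move=> f; rewrite /Comp /sg /= ?eq_ll ?eq_rr ?eq_lr ?eq_rl ?expr0 ?expr1.
have h1 : Dd b (Xx a (Dd j (Pp (Ee i f)))) =
   Dd j (Dd b (Xx a (Pp (Ee i f)))) + sc (j == a)%:R (Dd b (Pp (Ee i f))).
  by rewrite (@R_XD _ _ _ _ a j) O_D O_Z O_M (@R_DD _ _ _ _ b j).
have h2 : Dd j (Pp (Ee i (Dd b (Xx a f)))) = Dd j (Dd b (Xx a (Pp (Ee i f)))).
  by wout.
rewrite h1 h2; fin.
Qed.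

Lemma MI_BFBB j i a b : MI (inr j) (inl i) (inr a) (inr b).
Proof.
move=> f; rewrite /Comp /sg /= ?eq_ll ?eq_rr ?eq_lr ?eq_rl ?expr0 ?expr1.
have h1 : Ii i (Pp (Xx j (Dd b (Xx a f)))) =
   Dd b (Xx j (Xx a (Ii i (Pp f)))) + sc (b == j)%:R (Xx a (Ii i (Pp f))).
  by rewrite (@R_XD _ _ _ _ j b) !O_D !O_Z !O_M; wout.
have h2 : Dd b (Xx a (Ii i (Pp (Xx j f)))) = Dd b (Xx j (Xx a (Ii i (Pp f)))).
  by wout; rewrite (@R_XX _ _ _ _ a j).
have h3 : Ii i (Pp (Xx a f)) = Xx a (Ii i (Pp f)) by wout.
rewrite h1 h2 h3; fin.
Qed.

Lemma MI_all u v u' v' : MI u v u' v'.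
Proof.
case: u => [i|j]; case: v => [k|l]; case: u' => [i'|j']; case: v' => [k'|l'].
all: first [ exact: MI_FFFF | exact: MI_BBBB | exact: MI_FFBB | exact: MI_FFFB
           | exact: MI_FFBF | exact: MI_FBFB | exact: MI_BFBF | exact: MI_FBBF
           | exact: MI_FBBB | exact: MI_BFBB
           | apply: MI_sym; first [ exact: MI_FFBB | exact: MI_FFFB | exact: MI_FFBF
                                  | exact: MI_FBBF | exact: MI_FBBB | exact: MI_BFBB ] ].
Qed.

End Cases.


Lemma filter_nth_iota (T : eqType) (x0 k : T) (s : seq T) : uniq s ->
  [seq p <- iota 0 (size s) | nth x0 s p == k] = if k \in s then [:: index k s] else [::].
Proof.
elim: s => [|y s IH] // hu; case/andP: hu => ys us.
have e : iota 1 (size s) = [seq (1 + i)%N | i <- iota 0 (size s)] by rewrite -iotaDl addn0.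
rewrite /= e filter_map.
have -> : [seq p <- iota 0 (size s) | preim (fun i => (1 + i)%N) (fun p => nth x0 (y :: s) p == k) p]
   = [seq p <- iota 0 (size s) | nth x0 s p == k] by [].
rewrite IH // inE.
have [yk|ne] := eqVneq y k.
  subst y.
  by rewrite (negbTE ys).
by case: (k \in s).
Qed.

Section Main.
Variables (C : fieldType) (m n : nat) (lam : 'I_n -> C).
Local Notation B := (basis C m n).
Local Notation V := (B -> C).
Local Notation inSb := (@inSb C n lam).

Lemma tR6 : (true%:R : C) = 1. Proof. by []. Qed.
Lemma fR6 : (false%:R : C) = 0. Proof. by []. Qed.
Ltac rg6 := rewrite ?tR6 ?fR6; ring.

Definition Act (a b : 'I_(m + n)) (f : V) (x : B) : C :=
  \sum_(u <- act a b x | inSb u.2.2) u.1 * f u.2.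

Lemma Act_nf a b f x : inSb x.2 -> Act a b f x = @Comp C m n lam (fintype.split a) (fintype.split b) f x.
Proof.
case: x => I l /= hx; rewrite /Act /act /Comp /=.
case: (fintype.split a) => [i|j]; case: (fintype.split b) => [k|j'].
- rewrite cardE filter_nth_iota ?enum_uniq // mem_enum /O /= /Submission.mask /= hx.
  case: (boolP (k \in I)) => hk /=; last by rewrite big_nil /iot (negbTE hk); rg6.
  rewrite big_cons big_nil /mkterm /= (@wedge_set_nth _ C i k I hk) hx /iot /eps hk.
  by case: (boolP (i \in I :\ k)) => hik /=; rewrite ?exprD; rg6.
- rewrite big_cons big_nil /mkterm /= wedge_cons /O /= /Submission.mask /= hx /eps.
  case: (boolP (i \in I)) => hi /=; first by case: ifP => _; rg6.
  have [z|nz] := eqVneq (l j') 0; first by rewrite z; case: ifP => _; rg6.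
  by rewrite (@inSb_subE C n lam _ _ hx nz); rg6.
- rewrite /O /= /Submission.mask /= hx /iot.
  case: (boolP (k \in I)) => hk /=; last by rewrite big_nil; rg6.
  rewrite big_cons big_nil /= (@cnt_index _ k I hk).
  have hc : (cnt k I <= #|I :\ k|)%N.
    rewrite -cnt_D1self /cnt; apply: subset_leq_card; apply/subsetP => x; rewrite inE; by case/andP.
  rewrite [#|I|](cardsD1 k) hk add1n subSS -signr_odd oddB // signr_addb !signr_odd.
  case: ifP => _; rg6.
  rewrite big_cons big_nil /= /O /= /Submission.mask /= hx moveE_eq.
  have [z|nz] := eqVneq (l j') 0; first by rewrite z; case: ifP => _; rg6.
  rewrite (@inSb_subE C n lam _ _ hx nz); case: ifP => _ /=; rg6.
Qed.

Lemma coef_actL (a b : 'I_(m + n)) (v : comb C m n) (y : B) :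
  coef (actL lam a b v) y = \sum_(t <- v | inSb t.2.2) t.1 * coef (act a b t.2) y.
Proof.
rewrite /coef /actL big_flatten /= big_map big_filter; apply: eq_bigr => t _.
by rewrite big_map mulr_sumr /=.
Qed.

Lemma actL_single (c d : 'I_(m + n)) (x : B) : inSb x.2 ->
  actL lam c d [:: (1, x)] = [seq (1 * u.1, u.2) | u <- act c d x].
Proof.
move=> hx; have hx' : `[< inS lam (fun j => x.2 j) >] = true := hx.
by rewrite /actL /= hx' /= cats0.
Qed.

Lemma coef_Act (a b : 'I_(m + n)) (z y : B) : inSb y.2 -> coef (act a b z) y = Act a b (fun w => (w == y)%:R) z.
Proof.
move=> hy; rewrite /coef /Act big_mkcond [RHS]big_mkcond; apply: eq_bigr => u _.
case: eqP => [->|_]; first by rewrite hy mulr1.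
by case: ifP => _; rewrite ?mulr0.
Qed.

Lemma O_S o (f g : V) : (forall z, inSb z.2 -> f z = g z) -> @O C m n lam o f = @O C m n lam o g.
Proof.
move=> h; apply/funext => x; rewrite /O.
case hz: (inSb (@tg C m n o x).2); first by rewrite h.
by rewrite -(@wt_mask_tg C m n lam o x) /Submission.mask hz !mulr0 !mul0r.
Qed.

Lemma Comp_S u v (f g : V) : (forall z, inSb z.2 -> f z = g z) -> @Comp C m n lam u v f = @Comp C m n lam u v g.
Proof. by move=> h; case: u => ?; case: v => ?; rewrite /Comp (O_S _ _ _ h). Qed.

Lemma Act_S (a b : 'I_(m + n)) (f g : V) (x : B) : (forall z, inSb z.2 -> f z = g z) -> Act a b f x = Act a b g x.
Proof. by move=> h; rewrite /Act; apply: eq_bigr => u hu; rewrite h. Qed.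

Lemma ipar_split (a : 'I_(m + n)) : ipar a = @isr m n (fintype.split a).
Proof.
rewrite /ipar; case: splitP => [j e|k e] /=; rewrite e.
  by rewrite leqNgt ltn_ord.
by rewrite leq_addr.
Qed.

Lemma coef2 (a b c d : 'I_(m + n)) (x y : B) : inSb x.2 -> inSb y.2 ->
  coef (actL lam a b (actL lam c d [:: (1, x)])) y =
  @Comp C m n lam (fintype.split c) (fintype.split d)
     (@Comp C m n lam (fintype.split a) (fintype.split b) (fun w => (w == y)%:R)) x.
Proof.
move=> hx hy; rewrite coef_actL actL_single // big_map.
have -> : \sum_(j <- act c d x | inSb (1 * j.1, j.2).2.2) (1 * j.1, j.2).1 * coef (act a b (1 * j.1, j.2).2) y
   = Act c d (Act a b (fun w => (w == y)%:R)) x.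
  by rewrite /Act; apply: eq_bigr => u _ /=; rewrite mul1r coef_Act.
rewrite Act_nf //; apply: (congr1 (fun F => F x)); apply: Comp_S => z hz.
exact: Act_nf.
Qed.

Lemma coef1 (a b : 'I_(m + n)) (x y : B) : inSb x.2 -> inSb y.2 ->
  coef (actL lam a b [:: (1, x)]) y =
  @Comp C m n lam (fintype.split a) (fintype.split b) (fun w => (w == y)%:R) x.
Proof.
move=> hx hy; rewrite coef_actL big_cons big_nil hx mul1r addr0 coef_Act //.
exact: Act_nf.
Qed.

Lemma part1 (a b c d : 'I_(m + n)) (x y : B) : inSb x.2 -> inSb y.2 ->
      coef (actL lam a b (actL lam c d [:: (1, x)])) y
        - (-1) ^+ (Epar a b && Epar c d)
          * coef (actL lam c d (actL lam a b [:: (1, x)])) y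
      = (b == c)%:R * coef (actL lam a d [:: (1, x)]) y
        - (-1) ^+ (Epar a b && Epar c d) * (d == a)%:R
          * coef (actL lam c b [:: (1, x)]) y.
Proof.
move=> hx hy; rewrite !coef2 // !coef1 //.
have := congr1 (fun F => F x) (@MI_all C m n lam (fintype.split a) (fintype.split b)
   (fintype.split c) (fintype.split d) (fun w => (w == y)%:R)).
rewrite !(fB, fsc) /sg -!ipar_split -/(Epar a b) -/(Epar c d).
rewrite !(inj_eq (can_inj splitK)) => ->.
by [].
Qed.

End Main.


Lemma odd_absz_add1 (k : int) : odd (absz (k + 1)) = ~~ odd (absz k).
Proof.
case: k => [n|n].
  by rewrite -[1]/(Posz 1) -PoszD addn1 /=.
rewrite NegzE.
have -> : - (n.+1)%:Z + 1 = - (n%:Z) by rewrite -addn1 PoszD opprD addrK.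
by rewrite abszN /= negbK.
Qed.

Lemma odd_absz_sub1 (k : int) : odd (absz (k - 1)) = ~~ odd (absz k).
Proof. by rewrite -[in RHS](subrK 1 k) odd_absz_add1 negbK. Qed.

Section Grad.
Variables (C : fieldType) (m n : nat) (lam : 'I_n -> C).
Local Notation B := (basis C m n).

Definition Ssum (l : {ffun 'I_n -> C}) : C := \sum_(j < n) (lam j - l j).

Lemma sum_ind (j : 'I_n) : \sum_(i < n) ((i == j)%:R : C) = 1.
Proof.
rewrite (bigD1 j) //= eqxx big1 ?addr0 // => i /negbTE ->; by [].
Qed.

Lemma Ssum_sub l j : Ssum (subE l j) = Ssum l + 1.
Proof.
rewrite /Ssum -(sum_ind j) -big_split /=; apply: eq_bigr => i _; rewrite ffunE; ring.
Qed.
Lemma Ssum_add l j : Ssum (addE l j) = Ssum l - 1.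
Proof.
rewrite /Ssum -(sum_ind j) -sumrB /=; apply: eq_bigr => i _; rewrite ffunE; ring.
Qed.
Lemma Ssum_move l j k : Ssum (moveE l j k) = Ssum l.
Proof. by rewrite moveE_eq Ssum_add Ssum_sub addrK. Qed.

Lemma act_t2 (a b : 'I_(m + n)) (x : B) t : t \in act a b x ->
  Ssum t.2.2 = Ssum x.2 + (if Epar a b then (if ipar a then -1 else 1) else 0).
Proof.
rewrite /Epar !ipar_split /act.
case: (fintype.split a) => [i|j]; case: (fintype.split b) => [k|j'] /=.
- by case/mapP => p _ -> /=; rewrite addr0.
- by rewrite inE => /eqP -> /=; rewrite Ssum_sub.
- by case: ifP => _ //; rewrite inE => /eqP -> /=; rewrite Ssum_add.
- by rewrite inE => /eqP -> /=; rewrite Ssum_move addr0.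
Qed.

Lemma part2 (a b : 'I_(m + n)) (x : B) t p :
  t \in act a b x -> bpar lam x p -> bpar lam t.2 (p (+) Epar a b).
Proof.
move=> ht [k [hk hp]]; have := @act_t2 a b x t ht.
rewrite /Ssum -/(Ssum x.2) => e.
case: (Epar a b) e => /=; last first.
  by rewrite addr0 addbF => e; exists k; split => //; rewrite -hk.
case: (ipar a) => e.
  exists (k - 1); split; last by rewrite odd_absz_sub1 hp addbT.
  by rewrite /Ssum in e; rewrite e /Ssum hk rmorphB /= rmorph1.
exists (k + 1); split; last by rewrite odd_absz_add1 hp addbT.
by rewrite /Ssum in e; rewrite e /Ssum hk rmorphD /= rmorph1.
Qed.

End Grad.

Theorem lemma4p1 (R : realType) (m n : nat) (lam : 'I_n -> R[i]) :
  (* the linear extension of the action is a representation of gl(m,n):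
     E_ab E_cd - (-1)^{|E_ab||E_cd|} E_cd E_ab
       = [E_ab, E_cd] = delta_bc E_ad - (-1)^{|E_ab||E_cd|} delta_da E_cb,
     checked on every basis vector x of M(lambda), coefficientwise *)
  (forall (a b c d : 'I_(m + n)) (x y : basis (R[i]) m n),
      inS lam (fun j => x.2 j) -> inS lam (fun j => y.2 j) ->
      coef (actL lam a b (actL lam c d [:: (1, x)])) y
        - (-1) ^+ (Epar a b && Epar c d)
          * coef (actL lam c d (actL lam a b [:: (1, x)])) y
      = (b == c)%:R * coef (actL lam a d [:: (1, x)]) y
        - (-1) ^+ (Epar a b && Epar c d) * (d == a)%:R
          * coef (actL lam c b [:: (1, x)]) y)
  /\
  (* the action is compatible with the Z_2-grading of M(lambda) *)
  (forall (a b : 'I_(m + n)) (x : basis (R[i]) m n) (t : R[i] * basis (R[i]) m n)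
          (p : bool),
      inS lam (fun j => x.2 j) -> t \in act a b x -> t.1 != 0 ->
      inS lam (fun j => t.2.2 j) ->
      bpar lam x p -> bpar lam t.2 (p (+) Epar a b)).
Proof.
split.
- move=> a b c d x y hx hy.
  exact: (@part1 R[i] m n lam a b c d x y (asboolT hx) (asboolT hy)).
- move=> a b x t p _ ht _ _ hb.
  exact: (@part2 R[i] m n lam a b x t p ht hb).
Qed.
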